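(* For any finite set of $\mathrm{B}'$-rules, the calculus $\mathbf{L}^*(/)$ extended with these $\mathrm{B}'$-rules admits cut elimination: every sequent derivable in it (using cut) is derivable without using the cut rule.
   Context: $\mathbf{L}^*(/)$ is the one-division Lambek calculus: formulae are built from variables using only $/$; sequents are $\Pi\to A$ with $\Pi$ a finite (possibly empty) sequence of formulae; axioms $A\to A$; rules ($/L$) from $\Pi\to A$ and $\Delta_1,B,\Delta_2\to C$ infer $\Delta_1,B/A,\Pi,\Delta_2\to C$; ($/R$) from $\Pi,A\to B$ infer $\Pi\to B/A$; (cut) from $\Pi\to A$ and $\Delta_1,A,\Delta_2\to C$ infer $\Delta_1,\Pi,\Delta_2\to C$. For a tuple $(q_1,\dots,q_m,r;p_1,\dots,p_k,t)$ of concrete variables, the corresponding $\mathrm{B}'$-rule is: from $\Pi_1\to p_1$, ..., $\Pi_k\to p_k$ and $\Delta,q_1,\dots,q_m\to r$ infer $\Pi_1,\dots,\Pi_k,\Delta\to t$, for arbitrary sequences of formulae $\Pi_1,\dots,\Pi_k,\Delta$. *)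

(* Defs.v *)
From Stdlib Require Import List.
Import ListNotations.

(* Formulae built from variables (indexed by nat) using only "/".
   [Div B A] is the formula B / A. *)
Inductive formula : Type :=
| Var : nat -> formula
| Div : formula -> formula -> formula.

Record brule : Type := mkBrule {
  br_qs : list nat;
  br_r  : nat;
  br_ps : list nat;
  br_t  : nat
}.

(* Antecedents may be empty (as in L-star). *)
Inductive deriv (rules : list brule) (withcut : bool)
  : list formula -> formula -> Prop :=
| d_ax : forall A, deriv rules withcut [A] A
| d_divL : forall Pi Delta1 Delta2 A B C,
    deriv rules withcut Pi A ->
    deriv rules withcut (Delta1 ++ B :: Delta2) C ->
    deriv rules withcut (Delta1 ++ Div B A :: Pi ++ Delta2) C
| d_divR : forall Pi A B,
    deriv rules withcut (Pi ++ [A]) B ->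
    deriv rules withcut Pi (Div B A)
| d_cut : forall Pi Delta1 Delta2 A C,
    withcut = true ->
    deriv rules withcut Pi A ->
    deriv rules withcut (Delta1 ++ A :: Delta2) C ->
    deriv rules withcut (Delta1 ++ Pi ++ Delta2) C
| d_brule : forall rho (Pis : list (list formula)) Delta,
    In rho rules ->
    length Pis = length (br_ps rho) ->
    (forall i, i < length (br_ps rho) ->
       deriv rules withcut (nth i Pis []) (Var (nth i (br_ps rho) 0))) ->
    deriv rules withcut (Delta ++ map Var (br_qs rho)) (Var (br_r rho)) ->
    deriv rules withcut (concat Pis ++ Delta) (Var (br_t rho)).

(* Main.v *)
Require Import Defs.
From Stdlib Require Import List Arith Lia.
Import ListNotations.

Lemma split1 {T} (l1 l2 D1 D2 : list T) x a :
  l1 ++ x :: l2 = D1 ++ a :: D2 ->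
  (exists M, l1 = D1 ++ a :: M /\ D2 = M ++ x :: l2) \/
  (D1 = l1 /\ a = x /\ D2 = l2) \/
  (exists M, D1 = l1 ++ x :: M /\ l2 = M ++ a :: D2).
Proof.
  revert D1; induction l1 as [|y l1 IH]; intros [|d D1] H; simpl in H;
    injection H as H1 H2; subst.
  - right; left; auto.
  - right; right; exists D1; auto.
  - left; exists l1; auto.
  - destruct (IH D1 H2) as [[M [? ?]]|[[? [? ?]]|[M [? ?]]]]; subst.
    + left; exists M; auto.
    + right; left; auto.
    + right; right; exists M; auto.
Qed.

Lemma split2 {T} (M D2 P Q : list T) a :
  M ++ a :: D2 = P ++ Q ->
  (exists Y, P = M ++ a :: Y /\ D2 = Y ++ Q) \/
  (exists M', Q = M' ++ a :: D2 /\ M = P ++ M').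
Proof.
  revert M; induction P as [|p P IH]; intros M H; simpl in H.
  - right; exists M; auto.
  - destruct M as [|m M]; simpl in H; injection H as H1 H2; subst.
    + left; exists P; auto.
    + destruct (IH M H2) as [[Y [? ?]]|[M' [? ?]]]; subst.
      * left; exists Y; auto.
      * right; exists M'; auto.
Qed.

Lemma concat_split (Pis : list (list formula)) D1 a E :
  concat Pis = D1 ++ a :: E ->
  exists L1 X1 X2 L2, Pis = L1 ++ (X1 ++ a :: X2) :: L2 /\
    D1 = concat L1 ++ X1 /\ E = X2 ++ concat L2.
Proof.
  revert D1; induction Pis as [|P Ps IH]; intros D1 H; simpl in H.
  - destruct D1; discriminate.
  - symmetry in H. destruct (split2 _ _ _ _ _ H) as [[Y [? ?]]|[M' [? ?]]]; subst.
    + exists [], D1, Y, Ps; auto.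
    + destruct (IH M' H0) as [L1 [X1 [X2 [L2 [? [? ?]]]]]]; subst.
      exists (P :: L1), X1, X2, L2; simpl; rewrite app_assoc; auto.
Qed.

Lemma nth_replace {T} (L1 L2 : list T) Y Z d i :
  i <> length L1 -> nth i (L1 ++ Y :: L2) d = nth i (L1 ++ Z :: L2) d.
Proof.
  revert i; induction L1 as [|x L1 IH]; intros [|i] Hi; simpl in *; auto; try lia.
Qed.

Lemma inv_divR rules G C : deriv rules false G C ->
  forall B A, C = Div B A -> deriv rules false (G ++ [A]) B.
Proof.
  induction 1; intros B' A' HC; try discriminate.
  - subst. apply (d_divL rules false [A'] [] [] A' B' B'); constructor.
  - subst. rewrite <- app_assoc. simpl. rewrite <- app_assoc.
    apply d_divL; auto. rewrite app_comm_cons, app_assoc. apply IHderiv2; auto.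
  - injection HC as; subst; auto.
Qed.

Lemma subst_gen rules A Pi : deriv rules false Pi A ->
  (forall B0 A0 Pi0 Delta1 Delta2 C, A = Div B0 A0 -> deriv rules false Pi0 A0 ->
     deriv rules false (Delta1 ++ B0 :: Delta2) C ->
     deriv rules false (Delta1 ++ Pi ++ Pi0 ++ Delta2) C) ->
  forall G C, deriv rules false G C -> forall D1 D2, G = D1 ++ A :: D2 ->
  deriv rules false (D1 ++ Pi ++ D2) C.
Proof.
  intros HPi Hprin G C HG.
  induction HG as [A1|Pi0 Delta1 Delta2 A0 B0 C0 H1 IH1 H2 IH2|Pi0 A0 B0 H IH
    |Pi0 Delta1 Delta2 A0 C0 Hf|rho Pis Delta Hin Hlen Hps IHps Hq IHq];
    intros D1 D2 HE.
  - destruct D1 as [|d [|]]; simpl in HE; injection HE as; subst; try discriminate.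
    simpl; rewrite app_nil_r; auto.
  - destruct (split1 _ _ _ _ _ _ HE) as [[M [? ?]]|[[? [? ?]]|[M [? ?]]]]; subst.
    + repeat rewrite <- app_assoc. simpl.
      replace (D1 ++ Pi ++ M ++ Div B0 A0 :: Pi0 ++ Delta2) with
        ((D1 ++ Pi ++ M) ++ Div B0 A0 :: Pi0 ++ Delta2)
        by (repeat rewrite <- app_assoc; reflexivity).
      apply d_divL; auto. repeat rewrite <- app_assoc. apply IH2. rewrite <- app_assoc; reflexivity.
    + repeat rewrite <- app_assoc; eapply Hprin; eauto.
    + symmetry in H0; destruct (split2 _ _ _ _ _ H0) as [[Y [? ?]]|[M' [? ?]]]; subst.
      * rewrite <- app_assoc. simpl. repeat rewrite <- app_assoc.
        replace (M ++ Pi ++ Y ++ Delta2) with ((M ++ Pi ++ Y) ++ Delta2)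
          by (repeat rewrite <- app_assoc; reflexivity).
        apply d_divL; auto.
      * repeat rewrite <- app_assoc. simpl. rewrite <- app_assoc.
        replace (Delta1 ++ Div B0 A0 :: Pi0 ++ M' ++ Pi ++ D2) with
          (Delta1 ++ Div B0 A0 :: Pi0 ++ (M' ++ Pi ++ D2)) by reflexivity.
        apply d_divL; auto.
        rewrite app_comm_cons, app_assoc. apply IH2. rewrite <- app_assoc; reflexivity.
  - subst. apply d_divR. repeat rewrite <- app_assoc. apply IH. rewrite <- app_assoc; reflexivity.
  - discriminate.
  - symmetry in HE. destruct (split2 _ _ _ _ _ HE) as [[Y [HY ?]]|[M' [? ?]]]; subst.
    + destruct (concat_split _ _ _ _ HY) as [L1 [X1 [X2 [L2 [? [? ?]]]]]]; subst.
      replace ((concat L1 ++ X1) ++ Pi ++ (X2 ++ concat L2) ++ Delta) with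
        (concat (L1 ++ (X1 ++ Pi ++ X2) :: L2) ++ Delta)
        by (rewrite concat_app; simpl; repeat rewrite <- app_assoc; reflexivity).
      apply d_brule; auto.
      * rewrite length_app in *; simpl in *; auto.
      * intros i Hi. destruct (Nat.eq_dec i (length L1)).
        -- subst i. rewrite nth_middle. specialize (IHps _ Hi).
           rewrite nth_middle in IHps. apply IHps; auto.
        -- rewrite (nth_replace _ _ _ (X1 ++ A :: X2)); auto.
    + rewrite <- app_assoc. apply d_brule; auto.
      repeat rewrite <- app_assoc. apply IHq. rewrite <- app_assoc; reflexivity.
Qed.

Lemma cut_adm rules A : forall Pi, deriv rules false Pi A ->
  forall G C, deriv rules false G C -> forall D1 D2, G = D1 ++ A :: D2 ->
  deriv rules false (D1 ++ Pi ++ D2) C.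
Proof.
  induction A as [n|B IHB A IHA]; intros Pi HPi; apply subst_gen; auto.
  - intros; discriminate.
  - intros B0 A0 Pi0 Delta1 Delta2 C HE H0 H1. injection HE as; subst.
    pose proof (inv_divR _ _ _ HPi _ _ eq_refl) as Hinv.
    pose proof (IHA _ H0 _ _ Hinv Pi []) as H2. rewrite app_nil_r in H2.
    replace (Delta1 ++ Pi ++ Pi0 ++ Delta2) with (Delta1 ++ (Pi ++ Pi0) ++ Delta2)
      by (repeat rewrite <- app_assoc; reflexivity).
    apply (IHB _ (H2 eq_refl) _ _ H1); auto.
Qed.

Theorem lemma4 (rules : list brule) (Pi : list formula) (A : formula) :
  deriv rules true Pi A -> deriv rules false Pi A.
Proof.
  induction 1.
  - constructor.
  - apply d_divL; auto.
  - apply d_divR; auto.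
  - eapply cut_adm; eauto.
  - apply d_brule; auto.
Qed.
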